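(* Let $\{e_j\}_{j=1}^d$ be a basis of $\mathbb C^d$ and let $x\in\mathbb C^d$ be full with respect to it, i.e. $\langle x,e_j\rangle\ne0$ for all $j$. Define the linear operator $T_x:\mathbb C^d\to\mathbb C^d$ by $$T_x=\sum_{j=1}^{d-1}\Big(|\langle x,e_j\rangle|^2\, e_j\otimes e_{j+1}^*-\langle e_j,x\rangle\langle x,e_{j+1}\rangle\, e_j\otimes e_j^*\Big).$$ Then the null space of $T_x$ is exactly $\{cx: c\in\mathbb C\}$.
   Context: $\mathbb C^d$ carries the standard inner product $\langle u,v\rangle=\sum_k u_k\overline{v_k}$. For a basis vector $e_j$, $e_j^*$ denotes the linear functional $y\mapsto\langle y,e_j\rangle$, and for $u\in\mathbb C^d$ and a linear functional $\varphi$, $u\otimes\varphi$ is the operator $y\mapsto\varphi(y)u$. *)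

(* Defs.v *)
From mathcomp Require Import all_boot all_algebra.
From mathcomp Require Export reals complex.
Set Implicit Arguments. Unset Strict Implicit. Unset Printing Implicit Defensive.
Import GRing.Theory Num.Theory.
Local Open Scope ring_scope.

Section Defs.
Variable R : realType.
Notation C := R[i].

Definition inner (d : nat) (u v : 'cV[C]_d) : C :=
  \sum_(k < d) u k 0 * (v k 0)^*.

Definition is_basis (d : nat) (e : 'I_d -> 'cV[C]_d) : bool :=
  let E := \matrix_(j < d) (e j)^T in row_free E && row_full E.

Definition full (d : nat) (e : 'I_d -> 'cV[C]_d) (x : 'cV[C]_d) : Prop :=
  forall j : 'I_d, inner x (e j) != 0.

(* T_x y = sum_{j=1}^{d-1} ( |<x,e_j>|^2 <y,e_{j+1}> e_j
                              - <e_j,x><x,e_{j+1}> <y,e_j> e_j ),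
   0-based: j ranges over j : 'I_d with j+1 < d, and e_{j+1} = e (insubd j j.+1). *)
Definition Tx (d : nat) (e : 'I_d -> 'cV[C]_d) (x y : 'cV[C]_d) : 'cV[C]_d :=
  \sum_(j < d | (j.+1 < d)%N)
    ( (`|inner x (e j)| ^+ 2 * inner y (e (insubd j j.+1))) *: e j
    - (inner (e j) x * inner x (e (insubd j j.+1)) * inner y (e j)) *: e j ).

End Defs.

(* Main.v *)
Require Import Defs.
From mathcomp Require Import all_boot all_algebra.
From mathcomp Require Import reals complex.
From mathcomp Require Import ring.
Import GRing.Theory Num.Theory.
Local Open Scope ring_scope.

Section Aux.
Variable R : realType.
Notation C := R[i].
Variable d : nat.
Variable e : 'I_d -> 'cV[C]_d.

Let E := \matrix_(j < d) (e j)^T.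

Lemma inner_conj (u v : 'cV[C]_d) : inner u v = (inner v u)^*.
Proof.
rewrite /inner rmorph_sum; apply: eq_bigr => k _.
by rewrite rmorphM /= conjCK mulrC.
Qed.

Lemma inner_lin (y x w : 'cV[C]_d) (c : C) :
  inner (y - c *: x) w = inner y w - c * inner x w.
Proof.
rewrite /inner mulr_sumr -sumrB; apply: eq_bigr => k _.
by rewrite !mxE mulrBl mulrA.
Qed.

Lemma inner_scale (x w : 'cV[C]_d) (c : C) :
  inner (c *: x) w = c * inner x w.
Proof.
rewrite /inner mulr_sumr; apply: eq_bigr => k _.
by rewrite !mxE mulrA.
Qed.

Hypothesis Hb : is_basis e.

Lemma unitE : E \in unitmx.
Proof. by move: Hb => /andP [h _]; rewrite -row_free_unit. Qed.

Lemma F1 (z : 'cV[C]_d) : (forall j, inner z (e j) = 0) -> z = 0.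
Proof.
move=> H.
have h : E *m map_mx Num.conj z = 0.
  apply/matrixP => j k; rewrite ord1 !mxE.
  transitivity ((inner z (e j))^*); last by rewrite H conjC0.
  rewrite /inner rmorph_sum; apply: eq_bigr => k' _.
  by rewrite !mxE rmorphM /= conjCK mulrC.
move: h => /(congr1 (mulmx (invmx E))); rewrite mulKmx ?unitE // mulmx0 => h.
apply/matrixP => i k; have := congr1 (fun M : 'cV[C]_d => M i k) h; rewrite !mxE => /eqP.
by rewrite conjC_eq0 => /eqP.
Qed.

Lemma F2 (c : 'I_d -> C) : \sum_j c j *: e j = 0 -> forall j, c j = 0.
Proof.
move=> H.
have h : E^T *m (\col_j c j) = 0.
  apply/matrixP => k l.
  transitivity ((\sum_j c j *: e j) k l); last by rewrite H.
  rewrite ord1 summxE !mxE; apply: eq_bigr => j _.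
  by rewrite !mxE mulrC.
move: h => /(congr1 (mulmx (invmx E^T))); rewrite mulKmx ?unitmx_tr ?unitE //.
rewrite mulmx0 => h j; have := congr1 (fun M : 'cV[C]_d => M j 0) h.
by rewrite !mxE.
Qed.

End Aux.
Arguments inner_conj {R d}.
Arguments inner_lin {R d}.
Arguments inner_scale {R d}.
Arguments F1 {R d e}.

Theorem mainTheorem3 (R : realType) (d : nat) (e : 'I_d -> 'cV[R[i]]_d)
    (x : 'cV[R[i]]_d) :
  is_basis e -> full e x ->
  forall y : 'cV[R[i]]_d, Tx e x y = 0 <-> exists c : R[i], y = c *: x.
Proof.
move=> Hb Hf y.
set a := fun j => inner x (e j).
have TxE : forall z, Tx e x z = \sum_(j < d)
   (if (j.+1 < d)%N then `|a j| ^+ 2 * inner z (e (insubd j j.+1))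
      - inner (e j) x * a (insubd j j.+1) * inner z (e j) else 0) *: e j.
  move=> z; rewrite /Tx big_mkcond; apply: eq_bigr => j _.
  by case: ifP => _; rewrite ?scale0r // -scalerBl.
split.
- move=> HT.
  set b := fun j => inner y (e j).
  have step : forall j : 'I_d, (j.+1 < d)%N ->
      a j * b (insubd j j.+1) = a (insubd j j.+1) * b j.
    move=> j hj.
    have := @F2 R d e Hb _ (etrans (esym (TxE y)) HT) j; rewrite hj /=.
    rewrite normCK (inner_conj (e j) x) -/(a j) -/(b j) -/(b (insubd j j.+1)).
    set u := a j; set v := a _; set w := b _; set t := b j => h0.
    have hu : u^* != 0 by rewrite conjC_eq0; exact: Hf.
    apply/eqP; rewrite -subr_eq0; apply/eqP; apply: (mulfI hu).
    by rewrite mulr0 -[RHS]h0; ring.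
  case: (posnP d) => [d0 | dpos].
    exists 0; apply/eqP; rewrite scale0r; apply/eqP/(F1 Hb) => j.
    by have := ltn_ord j; rewrite {2}d0.
  pose k0 := Ordinal dpos; pose c := b k0 / a k0.
  have ha : forall j, a j != 0 by move=> j; exact: Hf.
  have claim : forall n (hn : (n < d)%N), b (Ordinal hn) = c * a (Ordinal hn).
    elim => [|n IH] hn.
      have -> : Ordinal hn = k0 by apply: val_inj.
      by rewrite /c divfK.
    have hn' : (n < d)%N by apply: ltnW.
    have := step (Ordinal hn') hn.
    have -> : insubd (Ordinal hn') (Ordinal hn').+1 = Ordinal hn.
      by apply: val_inj; rewrite val_insubd /= hn.
    rewrite IH => h1; apply: (mulfI (ha (Ordinal hn'))).
    by rewrite h1; ring.
  exists c; apply/subr0_eq/(F1 Hb) => j; rewrite inner_lin.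
  by case: j => n hn; rewrite -/(b _) -/(a _) claim subrr.
- move=> [c ->]; rewrite TxE; apply: big1 => j _.
  case: ifP => _; last by rewrite scale0r.
  rewrite !inner_scale normCK (inner_conj (e j) x) -/(a j).
  set u := a j; set v := a _.
  have -> : u * u^* * (c * v) - u^* * v * (c * u) = 0 by ring.
  by rewrite scale0r.
Qed.
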